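(* Let $H,H^{(p)}$ ($p\in\mathbb N$) be coding functions and let $r,r_p\in(0,\infty)$ with $r<\Gamma(H)$ and $r_p<\Gamma(H^{(p)})$ for each $p$. Assume: (i) $\{s\ge0:H_s=\Gamma(H)\}=\{S(H)\}$; (ii) $H_s>\Gamma(H)-r$ for all $s\in(\sigma^-_r(H),\sigma^+_r(H))$; (iii) $H^{(p)}\to H$ uniformly on compacts, $\zeta(H^{(p)})\to\zeta(H)$ and $r_p\to r$. Then $S(H^{(p)})\to S(H)$, $\sigma^-_{r_p}(H^{(p)})\to\sigma^-_r(H)$, $\sigma^+_{r_p}(H^{(p)})\to\sigma^+_r(H)$; moreover $\Theta_{r_p}(H^{(p)})\to\Theta_r(H)$ uniformly on compacts and $\zeta(\Theta_{r_p}(H^{(p)}))\to\zeta(\Theta_r(H))$.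
   Context: A coding function is a continuous $H:\mathbb R_+\to\mathbb R_+$ with compact support, $H_0=0$, not identically zero. $\zeta(H)=\sup\{t:H_t>0\}$, $\Gamma(H)=\sup H$, $S(H)=\inf\{t\ge0:H_t=\Gamma(H)\}$. For $r\in(0,\Gamma(H))$: $\sigma^-_r(H)=\sup\{t\in[0,S(H)]:H_t<\Gamma(H)-r\}$, $\sigma^+_r(H)=\inf\{t\ge S(H):H_t<\Gamma(H)-r\}$, and $\Theta_r(H)(t)=H\big((\sigma^-_r(H)+t)\wedge\sigma^+_r(H)\big)-\Gamma(H)+r$ for $t\ge0$. *)

(* Defs.v *)
From Stdlib Require Import Reals Lra.
From Coquelicot Require Import Coquelicot.
Open Scope R_scope.

(* A coding function H : R_+ -> R_+ is represented by a function R -> R of which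
   only the values on [0, +oo) matter. *)
Definition coding_function (H : R -> R) : Prop :=
  (forall t, 0 <= t -> forall eps, 0 < eps -> exists delta, 0 < delta /\
      forall s, 0 <= s -> Rabs (s - t) < delta -> Rabs (H s - H t) < eps) /\
  (forall t, 0 <= t -> 0 <= H t) /\
  (exists M, forall t, M <= t -> H t = 0) /\
  H 0 = 0 /\
  (exists t, 0 <= t /\ H t <> 0).

Definition zeta (H : R -> R) : R := real (Lub_Rbar (fun t => 0 <= t /\ 0 < H t)).

Definition Gamma (H : R -> R) : R :=
  real (Lub_Rbar (fun y => exists t, 0 <= t /\ y = H t)).

Definition S (H : R -> R) : R :=
  real (Glb_Rbar (fun t => 0 <= t /\ H t = Gamma H)).

Definition sigma_minus (r : R) (H : R -> R) : R :=
  real (Lub_Rbar (fun t => 0 <= t /\ t <= S H /\ H t < Gamma H - r)).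

Definition sigma_plus (r : R) (H : R -> R) : R :=
  real (Glb_Rbar (fun t => S H <= t /\ H t < Gamma H - r)).

Definition Theta (r : R) (H : R -> R) : R -> R :=
  fun t => H (Rmin (sigma_minus r H + t) (sigma_plus r H)) - Gamma H + r.

Definition ucc (F : nat -> R -> R) (G : R -> R) : Prop :=
  forall K, 0 <= K -> forall eps, 0 < eps -> exists N : nat, forall p : nat, (N <= p)%nat ->
    forall t, 0 <= t <= K -> Rabs (F p t - G t) < eps.

(* Main.v *)
Require Import Defs.
From Stdlib Require Import Reals Lra Lia Classical.
From Coquelicot Require Import Coquelicot.
Open Scope R_scope.

Lemma lub_spec (E : R -> Prop) x0 M : E x0 -> (forall x, E x -> x <= M) ->
 (forall x, E x -> x <= real (Lub_Rbar E)) /\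
 (forall M', (forall x, E x -> x <= M') -> real (Lub_Rbar E) <= M') /\
 (forall e, 0 < e -> exists x, E x /\ real (Lub_Rbar E) - e < x).
Proof.
 intros H0 HM. generalize (Lub_Rbar_correct E).
 destruct (Lub_Rbar E) as [l| |]; intros [Hub Hl]; simpl.
 - split; [intros x Hx; exact (Hub x Hx)|]. split.
   + intros M' HM'; apply (Hl (Finite M')); intros x Hx; simpl; auto.
   + intros e He. apply NNPP; intro Hn.
     assert (Hle : Rbar_le l (l - e)).
     { apply Hl. intros x Hx; simpl. apply Rnot_lt_le; intro; apply Hn; eauto. }
     simpl in Hle; lra.
 - exfalso. specialize (Hl (Finite M)). simpl in Hl. apply Hl. intros x Hx; simpl; auto.
 - exfalso. specialize (Hub x0 H0); simpl in Hub; auto.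
Qed.

Lemma lub_le_gen (E : R -> Prop) M : (forall x, E x -> x <= M) -> 0 <= M ->
  real (Lub_Rbar E) <= M.
Proof.
 intros HM H0. generalize (Lub_Rbar_correct E).
 destruct (Lub_Rbar E) as [l| |]; intros [Hub Hl]; simpl.
 - apply (Hl (Finite M)); intros x Hx; simpl; auto.
 - exfalso. specialize (Hl (Finite M)). simpl in Hl. apply Hl. intros x Hx; simpl; auto.
 - auto.
Qed.

Lemma glb_spec (E : R -> Prop) x0 L : E x0 -> (forall x, E x -> L <= x) ->
 (forall x, E x -> real (Glb_Rbar E) <= x) /\
 (forall M, (forall x, E x -> M <= x) -> M <= real (Glb_Rbar E)) /\
 (forall e, 0 < e -> exists x, E x /\ x < real (Glb_Rbar E) + e).
Proof.
 intros H0 HL. generalize (Glb_Rbar_correct E).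
 destruct (Glb_Rbar E) as [l| |]; intros [Hlb Hl]; simpl.
 - split; [intros x Hx; exact (Hlb x Hx)|]. split.
   + intros M' HM'; apply (Hl (Finite M')); intros x Hx; simpl; auto.
   + intros e He. apply NNPP; intro Hn.
     assert (Hle : Rbar_le (l + e) l).
     { apply Hl. intros x Hx; simpl. apply Rnot_lt_le; intro; apply Hn; eauto. }
     simpl in Hle; lra.
 - exfalso. specialize (Hlb x0 H0); simpl in Hlb; auto.
 - exfalso. specialize (Hl (Finite L)). simpl in Hl. apply Hl. intros x Hx; simpl; auto.
Qed.

Definition cont0 (H : R -> R) : Prop :=
  forall t, 0 <= t -> forall eps, 0 < eps -> exists delta, 0 < delta /\
      forall s, 0 <= s -> Rabs (s - t) < delta -> Rabs (H s - H t) < eps.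

Lemma Rmax0_lip x y : Rabs (Rmax 0 y - Rmax 0 x) <= Rabs (y - x).
Proof. unfold Rmax; destruct (Rle_dec 0 y); destruct (Rle_dec 0 x); split_Rabs; lra. Qed.

Lemma cont_g H : cont0 H -> forall x, continuity_pt (fun y => H (Rmax 0 y)) x.
Proof.
 intros Hc x. unfold continuity_pt, continue_in, limit1_in, limit_in. simpl. unfold R_dist.
 intros eps Heps. destruct (Hc (Rmax 0 x) (Rmax_l _ _) eps Heps) as [d [Hd Hs]].
 exists d; split; auto. intros y [_ Hy]. apply Hs. apply Rmax_l.
 eapply Rle_lt_trans; [apply Rmax0_lip| exact Hy].
Qed.

Lemma margin_lo H a b c : cont0 H -> 0 <= a -> (forall x, a <= x <= b -> c < H x) ->
  exists d, 0 < d /\ forall x, a <= x <= b -> c + d <= H x.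
Proof.
 intros Hc Ha Hx. destruct (Rle_dec a b) as [Hab|Hab].
 - destruct (continuity_ab_min (fun y => H (Rmax 0 y)) a b Hab (fun c _ => cont_g H Hc c))
     as [m [Hm Hma]].
   rewrite Rmax_right in Hm by lra.
   specialize (Hx m Hma). exists (H m - c); split; [lra|].
   intros x Hx'. specialize (Hm x Hx'). rewrite Rmax_right in Hm by lra. lra.
 - exists 1; split; [lra|]. intros; lra.
Qed.

Lemma margin_hi H a b c : cont0 H -> 0 <= a -> (forall x, a <= x <= b -> H x < c) ->
  exists d, 0 < d /\ forall x, a <= x <= b -> H x <= c - d.
Proof.
 intros Hc Ha Hx. destruct (Rle_dec a b) as [Hab|Hab].
 - destruct (continuity_ab_maj (fun y => H (Rmax 0 y)) a b Hab (fun c _ => cont_g H Hc c))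
     as [m [Hm Hma]].
   rewrite Rmax_right in Hm by lra.
   specialize (Hx m Hma). exists (c - H m); split; [lra|].
   intros x Hx'. specialize (Hm x Hx'). rewrite Rmax_right in Hm by lra. lra.
 - exists 1; split; [lra|]. intros; lra.
Qed.

Lemma lim_to u (l : R) : is_lim_seq u l -> forall e, 0 < e -> exists N, forall n, (N <= n)%nat -> Rabs (u n - l) < e.
Proof. intros Hl e He. apply is_lim_seq_spec in Hl. exact (Hl (mkposreal e He)). Qed.

Lemma lim_of u (l : R) : (forall e, 0 < e -> exists N, forall n, (N <= n)%nat -> Rabs (u n - l) < e) -> is_lim_seq u l.
Proof. intros Hl. apply is_lim_seq_spec. intros eps. exact (Hl eps (cond_pos eps)). Qed.

Lemma ucc_to F G : ucc F G -> forall K e, 0 < e -> exists N, forall p, (N <= p)%nat ->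
  forall t, 0 <= t <= K -> Rabs (F p t - G t) < e.
Proof.
 intros Hu K e He. destruct (Hu (Rmax K 0) (Rmax_r _ _) e He) as [N HN].
 exists N; intros p Hp t Ht. apply HN; auto. split; [lra|]. eapply Rle_trans; [apply Ht|apply Rmax_l].
Qed.

Lemma gamma_spec H : coding_function H ->
  (forall t, 0 <= t -> H t <= Gamma H) /\ (exists m, 0 <= m /\ H m = Gamma H).
Proof.
 intros [Hc [Hnn [[M HM] [H0 _]]]].
 set (M' := Rmax M 0).
 destruct (continuity_ab_maj (fun y => H (Rmax 0 y)) 0 M' (Rmax_r _ _) (fun c _ => cont_g H Hc c))
     as [m [Hm Hma]].
 rewrite Rmax_right in Hm by lra.
 assert (Hall : forall t, 0 <= t -> H t <= H m).
 { intros t Ht. destruct (Rle_dec t M') as [h|h].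
   - specialize (Hm t (conj Ht h)). rewrite Rmax_right in Hm by lra. exact Hm.
   - rewrite HM by (unfold M' in *; generalize (Rmax_l M 0); lra).
     specialize (Hm M' (conj (Rmax_r _ _) (Rle_refl _))).
     rewrite Rmax_right in Hm by (apply Rmax_r).
     rewrite HM in Hm by apply Rmax_l. exact Hm. }
 destruct (lub_spec (fun y => exists t, 0 <= t /\ y = H t) (H m) (H m)) as [A [B _]].
 - exists m; split; [lra|reflexivity].
 - intros x [t [Ht ->]]; auto.
 - assert (Heq : Gamma H = H m).
   { unfold Gamma. apply Rle_antisym.
     + apply B. intros x [t [Ht ->]]; auto.
     + apply A. exists m; split; [lra|reflexivity]. }
   rewrite Heq. split; auto. exists m; split; [lra|reflexivity].
Qed.

Lemma S_spec H : coding_function H ->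
  0 <= S H /\ (forall t, 0 <= t -> H t = Gamma H -> S H <= t) /\
  (forall M, (forall t, 0 <= t -> H t = Gamma H -> M <= t) -> M <= S H) /\
  (exists t, 0 <= t /\ H t = Gamma H /\ t <= S H).
Proof.
 intros cH. destruct (gamma_spec H cH) as [_ [m [Hm0 Hm]]].
 destruct (glb_spec (fun t => 0 <= t /\ H t = Gamma H) m 0) as [A [B C]].
 - auto.
 - intros x [h _]; auto.
 - unfold S. split; [apply B; intros x [h _]; auto|].
   split; [intros t h1 h2; apply A; auto|]. split.
   + intros M HM. apply B. intros x [h1 h2]; auto.
   +
     apply NNPP; intro Hn.
     assert (Hlb : forall t, 0 <= t -> H t = Gamma H -> real (Glb_Rbar (fun t => 0 <= t /\ H t = Gamma H)) < t).
     { intros t h1 h2. apply Rnot_le_lt. intro h3. apply Hn. exists t; auto. }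
     (* use continuity: Gamma attained at limit point *)
     set (s := real (Glb_Rbar (fun t => 0 <= t /\ H t = Gamma H))) in *.
     assert (Hs0 : 0 <= s) by (apply B; intros x [h _]; auto).
     pose proof cH as [Hc _].
     destruct (gamma_spec H cH) as [Hle _].
     exfalso.
     destruct (Req_dec (H s) (Gamma H)) as [E|E].
     * specialize (Hlb s Hs0 E); lra.
     * assert (Hlt : H s < Gamma H) by (generalize (Hle s Hs0); lra).
       destruct (Hc s Hs0 (Gamma H - H s)) as [d [Hd Hds]]; [lra|].
       destruct (C d Hd) as [x [[hx1 hx2] hx3]].
       assert (s <= x) by (apply A; auto).
       specialize (Hds x hx1). rewrite hx2 in Hds.
       assert (Rabs (x - s) < d) by (rewrite Rabs_right; lra).
       specialize (Hds H1). rewrite Rabs_right in Hds; lra.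
Qed.

Lemma zeta_spec H : coding_function H ->
  (forall t, 0 <= t -> 0 < H t -> t <= zeta H) /\ (forall t, zeta H < t -> H t = 0).
Proof.
 intros cH. pose proof cH as [Hc [Hnn [[M HM] [H0 [t0 [Ht0 Ht0']]]]]].
 assert (Hpos : 0 < H t0) by (generalize (Hnn t0 Ht0); intro; lra).
 destruct (lub_spec (fun t => 0 <= t /\ 0 < H t) t0 (Rmax M 0)) as [A _].
 - auto.
 - intros x [h1 h2]. destruct (Rle_dec M x) as [h|h].
   + rewrite HM in h2 by auto; lra.
   + generalize (Rmax_l M 0); lra.
 - unfold zeta. split.
   + intros t h1 h2. apply A; auto.
   + intros t ht. assert (Hz : t0 <= real (Lub_Rbar (fun t => 0 <= t /\ 0 < H t))) by (apply A; auto).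
     assert (0 <= t) by lra.
     generalize (Hnn t H1); intro h. destruct (Rle_lt_or_eq_dec _ _ h) as [h'|h']; [|auto].
     assert (t <= real (Lub_Rbar (fun t => 0 <= t /\ 0 < H t))) by (apply A; auto). lra.
Qed.

Lemma sigp_spec H r : coding_function H -> 0 < r -> r < Gamma H ->
  S H <= sigma_plus r H /\
  (forall t, S H <= t -> H t < Gamma H - r -> sigma_plus r H <= t) /\
  (forall M, (forall t, S H <= t -> H t < Gamma H - r -> M <= t) -> M <= sigma_plus r H) /\
  (forall e, 0 < e -> exists t, S H <= t /\ H t < Gamma H - r /\ t < sigma_plus r H + e) /\
  H (sigma_plus r H) <= Gamma H - r.
Proof.
 intros cH hr hG. pose proof cH as [Hc [Hnn [[M HM] [H0 _]]]].
 destruct (S_spec H cH) as [HS0 _].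
 destruct (glb_spec (fun t => S H <= t /\ H t < Gamma H - r) (Rmax M (S H)) (S H)) as [A [B C]].
 - split; [apply Rmax_r|]. rewrite HM by apply Rmax_l. lra.
 - intros x [h _]; auto.
 - unfold sigma_plus. set (s := real (Glb_Rbar (fun t => S H <= t /\ H t < Gamma H - r))) in *.
   assert (Hs : S H <= s) by (apply B; intros x [h _]; auto).
   split; auto. split; [intros; apply A; auto|]. split.
   { intros M0 HM0. apply B. intros x [h1 h2]; auto. }
   split; [intros e he; destruct (C e he) as [x [[h1 h2] h3]]; exists x; auto|].
   apply Rnot_lt_le; intro Hlt.
   destruct (Hc s ltac:(lra) (H s - (Gamma H - r))) as [d [Hd Hds]]; [lra|].
   destruct (C d Hd) as [x [[hx1 hx2] hx3]].
   assert (s <= x) by (apply A; auto).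
   assert (Hxd : Rabs (x - s) < d) by (rewrite Rabs_right; lra).
   specialize (Hds x ltac:(lra) Hxd). apply Rabs_def2 in Hds. lra.
Qed.

Lemma sigm_spec H r : coding_function H -> 0 < r -> r < Gamma H ->
  0 <= sigma_minus r H /\ sigma_minus r H <= S H /\
  (forall t, 0 <= t <= S H -> H t < Gamma H - r -> t <= sigma_minus r H) /\
  (forall M, (forall t, 0 <= t <= S H -> H t < Gamma H - r -> t <= M) -> sigma_minus r H <= M) /\
  (forall e, 0 < e -> exists t, 0 <= t <= S H /\ H t < Gamma H - r /\ sigma_minus r H - e < t).
Proof.
 intros cH hr hG. pose proof cH as [Hc [Hnn [[M HM] [H0 _]]]].
 destruct (S_spec H cH) as [HS0 _].
 destruct (lub_spec (fun t => 0 <= t /\ t <= S H /\ H t < Gamma H - r) 0 (S H)) as [A [B C]].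
 - split; [lra|]. split; [lra|]. rewrite H0; lra.
 - intros x [_ [h _]]; auto.
 - unfold sigma_minus. split; [apply A; split; [lra|]; split; [lra|]; rewrite H0; lra|].
   split; [apply B; intros x [_ [h _]]; auto|].
   split; [intros t [h1 h2] h3; apply A; auto|]. split.
   + intros M0 HM0. apply B. intros x [h1 [h2 h3]]; auto.
   + intros e he; destruct (C e he) as [x [[h1 [h2 h3]] h4]]; exists x; auto.
Qed.

Lemma theta_zeta H r : coding_function H -> 0 < r -> r < Gamma H ->
  zeta (Theta r H) <= sigma_plus r H - sigma_minus r H /\
  (forall t, 0 <= t -> 0 < Theta r H t -> t <= zeta (Theta r H)).
Proof.
 intros cH hr hG.
 destruct (sigp_spec H r cH hr hG) as [P1 [_ [_ [_ P5]]]].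
 destruct (sigm_spec H r cH hr hG) as [M1 [M2 _]].
 assert (Hb : forall t, 0 <= t /\ 0 < Theta r H t -> t <= sigma_plus r H - sigma_minus r H).
 { intros t [h1 h2]. apply Rnot_lt_le; intro h. unfold Theta in h2.
   rewrite Rmin_right in h2 by lra. lra. }
 unfold zeta. split.
 - apply lub_le_gen; auto. lra.
 - intros t h1 h2. destruct (lub_spec (fun t => 0 <= t /\ 0 < Theta r H t) t (sigma_plus r H - sigma_minus r H)) as [A _]; auto.
Qed.

Theorem lemma4p2 (H : R -> R) (Hp : nat -> R -> R) (r : R) (rp : nat -> R) :
  coding_function H ->
  (forall p, coding_function (Hp p)) ->
  0 < r -> r < Gamma H ->
  (forall p, 0 < rp p /\ rp p < Gamma (Hp p)) ->
  (* (i) *)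
  (forall s, (0 <= s /\ H s = Gamma H) <-> s = S H) ->
  (* (ii) *)
  (forall s, sigma_minus r H < s < sigma_plus r H -> H s > Gamma H - r) ->
  (* (iii) *)
  ucc Hp H ->
  is_lim_seq (fun p => zeta (Hp p)) (zeta H) ->
  is_lim_seq rp r ->
  is_lim_seq (fun p => S (Hp p)) (S H) /\
  is_lim_seq (fun p => sigma_minus (rp p) (Hp p)) (sigma_minus r H) /\
  is_lim_seq (fun p => sigma_plus (rp p) (Hp p)) (sigma_plus r H) /\
  ucc (fun p => Theta (rp p) (Hp p)) (Theta r H) /\
  is_lim_seq (fun p => zeta (Theta (rp p) (Hp p))) (zeta (Theta r H)).
Proof.
intros cH cHp hr hrG hrp Hi Hii Hu Hz Hr.
pose proof cH as [Hc [Hnn [_ [H0 _]]]].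
destruct (gamma_spec H cH) as [HleG _].
assert (HS : 0 <= S H /\ H (S H) = Gamma H) by (apply Hi; reflexivity).
destruct HS as [HS0 HSG].
destruct (zeta_spec H cH) as [Zin _].
assert (SZ : S H <= zeta H) by (apply Zin; lra).
assert (Glim : forall e, 0 < e -> exists N, forall p, (N <= p)%nat -> Rabs (Gamma (Hp p) - Gamma H) < e).
{ intros e he.
  destruct (lim_to _ _ Hz 1 Rlt_0_1) as [N1 HN1].
  destruct (ucc_to _ _ Hu (zeta H + 1) (e/2) ltac:(lra)) as [N2 HN2].
  exists (Nat.max N1 N2). intros p hp.
  specialize (HN1 p ltac:(lia)). specialize (HN2 p ltac:(lia)).
  apply Rabs_def2 in HN1.
  destruct (gamma_spec _ (cHp p)) as [Gp1 [m [hm0 hm]]].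
  destruct (zeta_spec _ (cHp p)) as [_ Zp].
  assert (up : Gamma (Hp p) <= Gamma H + e/2).
  { rewrite <- hm. destruct (Rle_dec m (zeta H + 1)) as [h|h].
    - pose proof (HN2 m (conj hm0 h)) as h2. apply Rabs_def2 in h2. generalize (HleG m hm0). lra.
    - rewrite Zp by lra. lra. }
  assert (lo : Gamma H - e/2 < Gamma (Hp p)).
  { pose proof (HN2 (S H) ltac:(lra)) as h2. apply Rabs_def2 in h2. generalize (Gp1 (S H) HS0). lra. }
  apply Rabs_def1; lra. }
assert (Slim : forall e, 0 < e -> exists N, forall p, (N <= p)%nat -> Rabs (S (Hp p) - S H) < e).
{ intros e he. set (e2 := e/2).
  set (Z := zeta H + 1).
  destruct (margin_hi H 0 (S H - e2) (Gamma H) Hc (Rle_refl 0)) as [d1 [hd1 Hd1]].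
  { intros x hx. generalize (HleG x (proj1 hx)); intro h.
    destruct (Rle_lt_or_eq_dec _ _ h) as [h'|h']; auto.
    assert (x = S H) by (apply Hi; split; [lra|auto]). unfold e2 in *; lra. }
  destruct (margin_hi H (S H + e2) Z (Gamma H) Hc ltac:(unfold e2; lra)) as [d2 [hd2 Hd2]].
  { intros x hx. generalize (HleG x ltac:(unfold e2 in *; lra)); intro h.
    destruct (Rle_lt_or_eq_dec _ _ h) as [h'|h']; auto.
    assert (x = S H) by (apply Hi; split; [unfold e2 in *; lra|auto]). unfold e2 in *; lra. }
  set (d := Rmin d1 d2). assert (hd : 0 < d) by (apply Rmin_pos; auto).
  assert (d <= d1) by apply Rmin_l. assert (d <= d2) by apply Rmin_r.
  destruct (lim_to _ _ Hz 1 Rlt_0_1) as [N1 HN1].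
  destruct (ucc_to _ _ Hu Z (d/2) ltac:(lra)) as [N2 HN2].
  destruct (Glim (d/2) ltac:(lra)) as [N3 HN3].
  exists (Nat.max N1 (Nat.max N2 N3)). intros p hp.
  specialize (HN1 p ltac:(lia)). specialize (HN2 p ltac:(lia)). specialize (HN3 p ltac:(lia)).
  apply Rabs_def2 in HN1. apply Rabs_def2 in HN3.
  destruct (zeta_spec _ (cHp p)) as [_ Zp].
  destruct (S_spec _ (cHp p)) as [Sp0 [Sp1 [Sp2 _]]].
  destruct (gamma_spec _ (cHp p)) as [_ [m [hm0 hm]]].
  assert (Gp : 0 < Gamma (Hp p)) by (destruct (hrp p); lra).
  assert (Arg : forall t, 0 <= t -> Hp p t = Gamma (Hp p) -> S H - e2 < t < S H + e2).
  { intros t ht0 ht. split.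
    - apply Rnot_le_lt; intro h. assert (hz : t <= Z) by (unfold Z, e2 in *; lra).
      pose proof (HN2 t (conj ht0 hz)) as h2. apply Rabs_def2 in h2.
      specialize (Hd1 t (conj ht0 h)). lra.
    - apply Rnot_le_lt; intro h. destruct (Rle_dec t Z) as [hz|hz].
      + pose proof (HN2 t (conj ht0 hz)) as h2. apply Rabs_def2 in h2.
        specialize (Hd2 t (conj h hz)). lra.
      + rewrite Zp in ht by (unfold Z in *; lra). lra. }
  assert (lo : S H - e2 <= S (Hp p)) by (apply Sp2; intros t h1 h2; generalize (Arg t h1 h2); lra).
  assert (up : S (Hp p) < S H + e2) by (generalize (Sp1 m hm0 hm) (Arg m hm0 hm); lra).
  apply Rabs_def1; unfold e2 in *; lra. }
destruct (sigp_spec H r cH hr hrG) as [P1 [P2 [P3 [P4 P5]]]].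
destruct (sigm_spec H r cH hr hrG) as [M1 [M2 [M3 [M4 M5]]]].
assert (SP : S H < sigma_plus r H /\ sigma_minus r H < S H).
{ destruct (Hc (S H) HS0 r hr) as [d [hd Hd]].
  split.
  - assert (S H + d/2 <= sigma_plus r H); [|lra].
    apply P3. intros t h1 h2. apply Rnot_lt_le; intro h.
    assert (ht : Rabs (t - S H) < d) by (rewrite Rabs_right; lra).
    specialize (Hd t ltac:(lra) ht). rewrite HSG in Hd. apply Rabs_def2 in Hd. lra.
  - assert (sigma_minus r H <= S H - d/2); [|lra].
    apply M4. intros t [h0 h1] h2. apply Rnot_lt_le; intro h.
    assert (ht : Rabs (t - S H) < d) by (rewrite Rabs_left1; lra).
    specialize (Hd t ltac:(lra) ht). rewrite HSG in Hd. apply Rabs_def2 in Hd. lra. }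
destruct SP as [SP1 SP2].
assert (mlim : forall e, 0 < e -> exists N, forall p, (N <= p)%nat ->
   Rabs (sigma_minus (rp p) (Hp p) - sigma_minus r H) < e).
{ intros e he. set (e2 := e/2). set (eta := (sigma_plus r H - S H)/2).
  assert (he2 : 0 < e2) by (unfold e2; lra). assert (heta : 0 < eta) by (unfold eta; lra).
  assert (heta2 : S H + eta < sigma_plus r H) by (unfold eta; lra).
  destruct (margin_lo H (sigma_minus r H + e2) (S H + eta) (Gamma H - r) Hc ltac:(unfold e2; lra))
    as [d [hd Hd]].
  { intros x hx. pose proof (Hii x ltac:(unfold e2, eta in *; lra)); lra. }
  destruct (M5 e2 ltac:(unfold e2; lra)) as [t [[t0 tS] [tH tg]]].
  assert (tS' : t < S H) by (destruct (Req_dec t (S H)) as [E|E]; [rewrite E in tH; lra|lra]).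
  set (d' := Gamma H - r - H t).
  set (dm := Rmin (d/4) (d'/3)).
  assert (hdm : 0 < dm) by (apply Rmin_pos; unfold d'; lra).
  assert (dm <= d/4) by apply Rmin_l. assert (dm <= d'/3) by apply Rmin_r.
  destruct (ucc_to _ _ Hu (S H + eta) dm hdm) as [N1 HN1].
  destruct (Glim dm hdm) as [N2 HN2].
  destruct (lim_to _ _ Hr dm hdm) as [N3 HN3].
  destruct (Slim (Rmin eta (S H - t)) ltac:(apply Rmin_pos; unfold eta; lra)) as [N4 HN4].
  exists (Nat.max (Nat.max N1 N2) (Nat.max N3 N4)). intros p hp.
  specialize (HN1 p ltac:(lia)). specialize (HN2 p ltac:(lia)).
  specialize (HN3 p ltac:(lia)). specialize (HN4 p ltac:(lia)).
  apply Rabs_def2 in HN2. apply Rabs_def2 in HN3. apply Rabs_def2 in HN4.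
  generalize (Rmin_l eta (S H - t)) (Rmin_r eta (S H - t)); intros m1 m2.
  destruct (sigm_spec (Hp p) (rp p) (cHp p) (proj1 (hrp p)) (proj2 (hrp p))) as [Q1 [Q2 [Q3 [Q4 _]]]].
  assert (up : sigma_minus (rp p) (Hp p) <= sigma_minus r H + e2).
  { apply Q4. intros x [x0 xS] xH. apply Rnot_lt_le; intro h.
    pose proof (HN1 x ltac:(split; lra)) as h1. apply Rabs_def2 in h1.
    pose proof (Hd x ltac:(split; lra)). lra. }
  assert (lo : t <= sigma_minus (rp p) (Hp p)).
  { apply Q3; [split; lra|].
    pose proof (HN1 t ltac:(unfold eta in *; split; lra)) as h1. apply Rabs_def2 in h1.
    unfold d' in *. lra. }
  apply Rabs_def1; unfold e2 in *; lra. }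
assert (plim : forall e, 0 < e -> exists N, forall p, (N <= p)%nat ->
   Rabs (sigma_plus (rp p) (Hp p) - sigma_plus r H) < e).
{ intros e he. set (e2 := e/2). set (eta := (S H - sigma_minus r H)/2).
  assert (he2 : 0 < e2) by (unfold e2; lra). assert (heta : 0 < eta) by (unfold eta; lra).
  assert (heta2 : sigma_minus r H < S H - eta) by (unfold eta; lra).
  destruct (margin_lo H (S H - eta) (sigma_plus r H - e2) (Gamma H - r) Hc ltac:(unfold eta; lra))
    as [d [hd Hd]].
  { intros x hx. pose proof (Hii x ltac:(unfold e2, eta in *; lra)); lra. }
  destruct (P4 e2 ltac:(unfold e2; lra)) as [t [tS [tH tg]]].
  assert (tS' : S H < t) by (destruct (Req_dec t (S H)) as [E|E]; [rewrite E in tH; lra|lra]).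
  set (d' := Gamma H - r - H t).
  set (dm := Rmin (d/4) (d'/3)).
  assert (hdm : 0 < dm) by (apply Rmin_pos; unfold d'; lra).
  assert (dm <= d/4) by apply Rmin_l. assert (dm <= d'/3) by apply Rmin_r.
  destruct (ucc_to _ _ Hu (sigma_plus r H + e2) dm hdm) as [N1 HN1].
  destruct (Glim dm hdm) as [N2 HN2].
  destruct (lim_to _ _ Hr dm hdm) as [N3 HN3].
  destruct (Slim (Rmin eta (t - S H)) ltac:(apply Rmin_pos; unfold eta; lra)) as [N4 HN4].
  exists (Nat.max (Nat.max N1 N2) (Nat.max N3 N4)). intros p hp.
  specialize (HN1 p ltac:(lia)). specialize (HN2 p ltac:(lia)).
  specialize (HN3 p ltac:(lia)). specialize (HN4 p ltac:(lia)).
  apply Rabs_def2 in HN2. apply Rabs_def2 in HN3. apply Rabs_def2 in HN4.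
  generalize (Rmin_l eta (t - S H)) (Rmin_r eta (t - S H)); intros m1 m2.
  destruct (sigp_spec (Hp p) (rp p) (cHp p) (proj1 (hrp p)) (proj2 (hrp p))) as [Q1 [Q2 [Q3 _]]].
  destruct (S_spec _ (cHp p)) as [Sp0 _].
  assert (lo : sigma_plus r H - e2 <= sigma_plus (rp p) (Hp p)).
  { apply Q3. intros x xS xH. apply Rnot_lt_le; intro h.
    pose proof (HN1 x ltac:(split; lra)) as h1. apply Rabs_def2 in h1.
    pose proof (Hd x ltac:(split; lra)). lra. }
  assert (up : sigma_plus (rp p) (Hp p) <= t).
  { apply Q2; [lra|].
    pose proof (HN1 t ltac:(split; lra)) as h1. apply Rabs_def2 in h1.
    unfold d' in *. lra. }
  apply Rabs_def1; unfold e2 in *; lra. }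
assert (Tucc : ucc (fun p => Theta (rp p) (Hp p)) (Theta r H)).
{ intros K hK e he.
  set (B := sigma_plus r H + 1).
  assert (UC := Heine (fun y => H (Rmax 0 y)) (fun c => 0 <= c <= B) (compact_P3 0 B)
                      (fun x _ => cont_g H Hc x)).
  destruct (UC (mkposreal (e/4) ltac:(lra))) as [dl Hdl]. simpl in Hdl.
  assert (hdl := cond_pos dl).
  set (dm := Rmin (dl/2) 1).
  assert (hdm : 0 < dm) by (apply Rmin_pos; lra).
  assert (dm <= dl/2) by apply Rmin_l. assert (dm <= 1) by apply Rmin_r.
  destruct (mlim dm hdm) as [N1 HN1].
  destruct (plim dm hdm) as [N2 HN2].
  destruct (ucc_to _ _ Hu B (e/4) ltac:(lra)) as [N3 HN3].
  destruct (Glim (e/4) ltac:(lra)) as [N4 HN4].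
  destruct (lim_to _ _ Hr (e/4) ltac:(lra)) as [N5 HN5].
  exists (Nat.max (Nat.max N1 N2) (Nat.max N3 (Nat.max N4 N5))). intros p hp t ht.
  specialize (HN1 p ltac:(lia)). specialize (HN2 p ltac:(lia)). specialize (HN3 p ltac:(lia)).
  specialize (HN4 p ltac:(lia)). specialize (HN5 p ltac:(lia)).
  apply Rabs_def2 in HN1. apply Rabs_def2 in HN2. apply Rabs_def2 in HN4. apply Rabs_def2 in HN5.
  destruct (sigm_spec (Hp p) (rp p) (cHp p) (proj1 (hrp p)) (proj2 (hrp p))) as [Q1 [Q2 _]].
  destruct (sigp_spec (Hp p) (rp p) (cHp p) (proj1 (hrp p)) (proj2 (hrp p))) as [R1 _].
  destruct (S_spec _ (cHp p)) as [Sp0 _].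
  unfold Theta.
  assert (hx : 0 <= Rmin (sigma_minus r H + t) (sigma_plus r H) <= B).
  { split; [apply Rmin_glb; lra|].
    generalize (Rmin_r (sigma_minus r H + t) (sigma_plus r H)); unfold B; lra. }
  assert (hxp : 0 <= Rmin (sigma_minus (rp p) (Hp p) + t) (sigma_plus (rp p) (Hp p)) <= B).
  { split; [apply Rmin_glb; lra|].
    generalize (Rmin_r (sigma_minus (rp p) (Hp p) + t) (sigma_plus (rp p) (Hp p))); unfold B; lra. }
  assert (dx : Rabs (Rmin (sigma_minus (rp p) (Hp p) + t) (sigma_plus (rp p) (Hp p))
                     - Rmin (sigma_minus r H + t) (sigma_plus r H)) < dl).
  { unfold Rmin. destruct (Rle_dec (sigma_minus (rp p) (Hp p) + t) (sigma_plus (rp p) (Hp p)));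
    destruct (Rle_dec (sigma_minus r H + t) (sigma_plus r H)); apply Rabs_def1; lra. }
  pose proof (Hdl _ _ hxp hx dx) as hu.
  rewrite (Rmax_right 0 (Rmin (sigma_minus (rp p) (Hp p) + t) (sigma_plus (rp p) (Hp p)))) in hu by lra.
  rewrite (Rmax_right 0 (Rmin (sigma_minus r H + t) (sigma_plus r H))) in hu by lra.
  apply Rabs_def2 in hu.
  pose proof (HN3 _ hxp) as hv. apply Rabs_def2 in hv.
  apply Rabs_def1; lra. }
set (D := sigma_plus r H - sigma_minus r H).
assert (Tpos : forall t, 0 < t < D -> 0 < Theta r H t).
{ intros t ht. unfold Theta. rewrite Rmin_left by (unfold D in *; lra).
  pose proof (Hii (sigma_minus r H + t) ltac:(unfold D in *; lra)). lra. }
destruct (theta_zeta H r cH hr hrG) as [Z1 Z2].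
assert (ZD : zeta (Theta r H) = D).
{ apply Rle_antisym; [exact Z1|]. apply Rnot_lt_le; intro h.
  assert (hm : Rmax (zeta (Theta r H)) 0 < D) by (apply Rmax_lub_lt; unfold D in *; lra).
  generalize (Rmax_l (zeta (Theta r H)) 0) (Rmax_r (zeta (Theta r H)) 0); intros m1 m2.
  assert ((Rmax (zeta (Theta r H)) 0 + D)/2 <= zeta (Theta r H)); [|lra].
  apply Z2; [lra|]. apply Tpos; lra. }
split; [apply lim_of; exact Slim|].
split; [apply lim_of; exact mlim|].
split; [apply lim_of; exact plim|].
split; [exact Tucc|].
apply lim_of. rewrite ZD. intros e he.
set (t := D - Rmin e D / 2).
assert (hD : 0 < D) by (unfold D; lra).
generalize (Rmin_l e D) (Rmin_r e D) (Rmin_pos e D he hD); intros m1 m2 m3.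
assert (ht : 0 < t < D) by (unfold t; lra).
destruct (ucc_to _ _ Tucc t (Theta r H t) (Tpos t ht)) as [N1 HN1].
destruct (mlim (e/2) ltac:(lra)) as [N2 HN2].
destruct (plim (e/2) ltac:(lra)) as [N3 HN3].
exists (Nat.max N1 (Nat.max N2 N3)). intros p hp.
specialize (HN1 p ltac:(lia) t ltac:(split; lra)).
specialize (HN2 p ltac:(lia)). specialize (HN3 p ltac:(lia)).
apply Rabs_def2 in HN1. apply Rabs_def2 in HN2. apply Rabs_def2 in HN3.
destruct (theta_zeta (Hp p) (rp p) (cHp p) (proj1 (hrp p)) (proj2 (hrp p))) as [W1 W2].
assert (t <= zeta (Theta (rp p) (Hp p))) by (apply W2; lra).
apply Rabs_def1; unfold t, D in *; lra.
Qed.
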